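(* Let $\gamma\in\mathcal{M}_k\otimes\mathcal{M}_k$ be a nonzero state whose image is contained in the anti-symmetric subspace of $\mathbb{C}^k\otimes\mathbb{C}^k$. Then $\gamma^\Gamma\not\ge0$, $\mathcal{R}(\gamma^\Gamma)\not\ge0$, and $\mathcal{R}(\gamma)\neq\gamma$.
   Context: $\mathcal{M}_k$ denotes complex $k\times k$ matrices; $\mathcal{M}_k\otimes\mathcal{M}_k\cong\mathcal{M}_{k^2}$ via the Kronecker product. A state is a positive semidefinite Hermitian matrix (not necessarily of trace one). The anti-symmetric subspace of $\mathbb{C}^k\otimes\mathbb{C}^k$ is $\{x:F_kx=-x\}$, where $F_k(v\otimes w)=w\otimes v$. Partial transpose: $(\sum_iA_i\otimes B_i)^\Gamma=\sum_iA_i\otimes B_i^t$. Realignment on $\mathcal{M}_k\otimes\mathcal{M}_k$: identify $\mathcal{M}_k$ with $\mathbb{C}^k\otimes\mathbb{C}^k$ via $\mathrm{vec}(vw^t)=v\otimes w$ (extended linearly), and set $\mathcal{R}(A\otimes B)=\mathrm{vec}(A)\mathrm{vec}(B)^t$, extended linearly. *)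

(* Defs.v *)
(* Complex matrices are modelled over an arbitrary
   numClosedFieldType C (e.g. algC or complex R for R : realType),
   which contains the case of the complex numbers. *)
From mathcomp Require Import all_boot all_order all_algebra.
From mathcomp Require Import mxtens.
Set Implicit Arguments. Unset Strict Implicit. Unset Printing Implicit Defensive.
Import Order.TTheory GRing.Theory Num.Theory.
Local Open Scope ring_scope.

(* Kronecker identification M_k (x) M_k = M_{k^2}: the basis vector
   e_i (x) e_j of C^k (x) C^k has index i*k + j (mxtens_index (i,j)). *)
Definition tidx (k : nat) (i j : 'I_k) : 'I_(k * k) := mxtens_index (i, j).

(* positive semidefinite Hermitian matrix ("state", and "X >= 0") *)
Definition psd (C : numClosedFieldType) (n : nat) (A : 'M[C]_n) : Prop :=
  (forall i j, A j i = (A i j)^*) /\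
  (forall v : 'cV[C]_n, 0 <= ((map_mx Num.conj v)^T *m A *m v) 0 0).

(* swap operator F_k (v (x) w) = w (x) v *)
Definition swap_mx (C : numClosedFieldType) (k : nat) : 'M[C]_(k * k) :=
  \matrix_(p, q)
    (((mxtens_unindex p).1 == (mxtens_unindex q).2) &&
     ((mxtens_unindex p).2 == (mxtens_unindex q).1))%:R.

(* partial transpose: (A (x) B)^Gamma = A (x) B^t, i.e.
   X^Gamma((i,j),(i',j')) = X((i,j'),(i',j)) *)
Definition ptrans (C : numClosedFieldType) (k : nat) (X : 'M[C]_(k * k))
  : 'M[C]_(k * k) :=
  \matrix_(p, q)
    X (tidx (mxtens_unindex p).1 (mxtens_unindex q).2)
      (tidx (mxtens_unindex q).1 (mxtens_unindex p).2).

(* realignment: vec(v w^t) = v (x) w, R(A (x) B) = vec(A) vec(B)^t, i.e.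
   R(X)((a,b),(c,d)) = X((a,c),(b,d)) *)
Definition realign (C : numClosedFieldType) (k : nat) (X : 'M[C]_(k * k))
  : 'M[C]_(k * k) :=
  \matrix_(p, q)
    X (tidx (mxtens_unindex p).1 (mxtens_unindex q).1)
      (tidx (mxtens_unindex p).2 (mxtens_unindex q).2).

(* Main.v *)
Require Import Defs.
From mathcomp Require Import all_boot all_order all_algebra.
From mathcomp Require Import mxtens.
From mathcomp Require Import ring.
Import Order.TTheory GRing.Theory Num.Theory.
Local Open Scope ring_scope.

Section Aux.
Variable C : numClosedFieldType.

Lemma uK k (x y : 'I_k) : mxtens_unindex (tidx x y) = (x, y).
Proof. by rewrite /tidx mxtens_indexK. Qed.

Lemma tidxK k (p : 'I_(k * k)) :
  tidx (mxtens_unindex p).1 (mxtens_unindex p).2 = p.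
Proof. by rewrite /tidx -surjective_pairing mxtens_unindexK. Qed.

Definition sw {k} (p : 'I_(k * k)) := tidx (mxtens_unindex p).2 (mxtens_unindex p).1.

Lemma swapE k m (M : 'M[C]_(k * k, m)) p q :
  (swap_mx C k *m M) p q = M (sw p) q.
Proof.
rewrite !mxE (bigD1 (sw p)) //= big1 ?addr0.
  by rewrite mxE /sw uK /= !eqxx mul1r.
move=> r hr; rewrite mxE.
case E: (_ && _); last by rewrite mul0r.
move/andP: E => [/eqP h1 /eqP h2].
exfalso; move/eqP: hr; apply.
by rewrite /sw h1 h2 tidxK.
Qed.

Lemma qform n (A : 'M[C]_n) i j a b :
  let v := a *: delta_mx i 0 + b *: delta_mx j 0 : 'cV_n in
  ((map_mx Num.conj v)^T *m A *m v) 0 0 =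
  a^* * a * A i i + a^* * b * A i j + b^* * a * A j i + b^* * b * A j j.
Proof.
move=> v.
have -> : (map_mx Num.conj v)^T = a^* *: delta_mx 0 i + b^* *: delta_mx 0 j.
  apply/matrixP => x y; rewrite !mxE.
  by rewrite [x]ord1 eqxx !andbT rmorphD !rmorphM /= !rmorph_nat.

rewrite /v !mulmxDl !mulmxDr -!scalemxAl -!scalemxAr -!rowE -!colE !mxE.
ring.
Qed.

Lemma psd_diag n (A : 'M[C]_n) : psd A -> forall p, 0 <= A p p.
Proof.
move=> [_ H] p; have := H (1 *: delta_mx p 0 + 0 *: delta_mx p 0).
by rewrite qform conjC1 conjC0 !mul1r !mul0r !addr0.
Qed.

Lemma psd_diag0 n (A : 'M[C]_n) : psd A -> (forall p, A p p = 0) -> A = 0.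
Proof.
move=> [hA H] Hd; apply/matrixP => i j; rewrite mxE.
set x := A i j.
have := H (1 *: delta_mx i 0 + (- x^*) *: delta_mx j 0).
have Ec : (- x^*)^* = - x by rewrite raddfN /= conjCK.
rewrite qform !Hd (hA i j) -/x Ec conjC1.
set l := (_ + _); have -> : l = - (x * x^* + x * x^*) by rewrite /l; ring.
rewrite oppr_ge0 => h.
have hy : 0 <= x * x^* by rewrite -normCK exprn_ge0.
have /eqP : x * x^* + x * x^* = 0 by apply/le_anti; rewrite h addr_ge0.
rewrite paddr_eq0 // andbb -normCK expf_eq0 /= normr_eq0 => /eqP //.
Qed.
End Aux.

Theorem mainTheorem17 (C : numClosedFieldType) (k : nat)
  (gamma : 'M[C]_(k * k)) :
  psd gamma -> gamma != 0 ->
  (forall x : 'cV[C]_(k * k),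
      swap_mx C k *m (gamma *m x) = - (gamma *m x)) ->
  ~ psd (ptrans gamma) /\ ~ psd (realign (ptrans gamma)) /\
  realign gamma != gamma.
Proof.
move=> Hpsd Hnz Hanti; have [Hh Hq] := Hpsd.
have Hrow : forall p q, gamma (sw p) q = - gamma p q.
  move=> p q; have := congr1 (fun M : 'cV[C]_(k * k) => M p 0) (Hanti (delta_mx q 0)).
  rewrite /= swapE -colE !mxE. done.
have Hcol : forall p q, gamma p (sw q) = - gamma p q.
  by move=> p q; rewrite (Hh (sw q) p) Hrow raddfN /= -(Hh q p).
have H0 : forall a q, gamma (tidx a a) q = 0.
  move=> a q; have := Hrow (tidx a a) q; rewrite /sw uK /=.
  by move/eqP; rewrite eq_sym eqNr => /eqP.
have H0' : forall a q, gamma q (tidx a a) = 0.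
  move=> a q; have := Hcol q (tidx a a); rewrite /sw uK /=.
  by move/eqP; rewrite eq_sym eqNr => /eqP.
have [p Hp] : exists p, gamma p p != 0.
  case: (pickP (fun p => gamma p p != 0)) => [p Hp|H]; first by exists p.
  exfalso; move/eqP: Hnz; apply; apply: psd_diag0 => // q.
  by move/negbFE/eqP: (H q).
have Hpos : 0 < gamma p p by rewrite lt_def Hp psd_diag.
set a := (mxtens_unindex p).1; set b := (mxtens_unindex p).2.
have hp : tidx a b = p := @tidxK k p.
have hs : tidx b a = sw p by [].
split; [|split].
- move=> [_ Hq']; have := Hq' (1 *: delta_mx (tidx a a) 0 + 1 *: delta_mx (tidx b b) 0).
  rewrite qform conjC1 !mul1r !mxE !uK /= hp hs H0 H0 Hcol Hrow.
  rewrite add0r addr0 -opprD oppr_ge0 => h.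
  by have := lt_le_trans (addr_gt0 Hpos Hpos) h; rewrite ltxx.
- move=> Hq'; have := @psd_diag C _ _ Hq' p.
  rewrite !mxE -/a -/b !uK /= hp hs Hcol oppr_ge0 => h.
  by have := lt_le_trans Hpos h; rewrite ltxx.
- apply/eqP => e; have := congr1 (fun M : 'M[C]_(k * k) => M p p) e.
  by rewrite /= mxE H0 => /esym /eqP; rewrite (negbTE Hp).
Qed.
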